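(* Let $K\subseteq\mathbb{R}^m$ be closed, $f:\mathbb{R}^n\to\mathbb{R}$, $G:\mathbb{R}^n\to\mathbb{R}^m$, $\Psi=\{x\in\mathbb{R}^n:G(x)\in K\}$ and let $x^*\in\Psi$. Suppose that $f$ is second-order epi-regular at $x^*$ and $G$ is second-order gph-regular at $x^*$. Suppose that MSCQ for $\Psi$ holds at $x^*$ and that $K$ is outer second-order regular at $G(x^* )$ in every direction $G'(x^*;d)\in\mathcal{T}_K(G(x^* ))$. Assume that for every direction $d$ with $G'(x^*;d)\in\mathcal{T}_K(G(x^* ))$ we have $f'(x^*;d)\ge0$, and that for every $d\in\mathcal{C}(x^* )\setminus\{0\}$ the optimization problem $$\min_w\ f''(x^*;d,w)\quad\text{s.t. } G''(x^*;d,w)\in\mathcal{T}^2_K(G(x^* );G'(x^*;d))$$ has a positive optimal objective value, where $\mathcal{C}(x^* ):=\{d\in\mathbb{R}^n: G'(x^*;d)\in\mathcal{T}_K(G(x^* )),\ f'(x^*;d)\le0\}$. Then the second-order growth condition holds at $x^*$ for the problem $\min f(x)$ s.t. $G(x)\in K$, i.e., there exist $c>0$ and a neighborhood $N$ of $x^*$ with $f(x)\ge f(x^* )+c\|x-x^*\|^2$ for all $x\in\Psi\cap N$.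
   Context: Definitions. For $g:\mathbb{R}^n\to\mathbb{R}^k$: $g'(x;d)=\lim_{t\downarrow0}(g(x+td)-g(x))/t$; $g$ is second-order directionally differentiable at $x$ if for every $d$, $g'(x;d)$ exists and $g''(x;d,w):=\lim_{t\downarrow0}\frac{g(x+td+\frac12t^2w)-g(x)-tg'(x;d)}{\frac12t^2}$ exists for all $w$. $g$ is second-order gph-regular (resp. epi-regular, for $k=1$) at $x^*$ if $g$ is locally Lipschitz continuous and second-order directionally differentiable at $x^*$ and for every $d\in\mathbb{R}^n$ and every path $w:\mathbb{R}_+\to\mathbb{R}^n$ with $tw(t)\to0$ as $t\downarrow0$ there is $r$ with $\|r(t)\|/t^2\to0$ as $t\downarrow0$ such that $g(x^*+td+\frac12t^2w(t))=g(x^* )+tg'(x^*;d)+\frac12t^2g''(x^*;d,w(t))+r(t)$ (resp. ''$\ge$'' instead of ''$=$'') for $t\ge0$. For a set $C$ and $x^*\in C$: tangent cone $\mathcal{T}_C(x^* )=\{d:\exists t_k\downarrow0,d^k\to d, x^*+t_kd^k\in C\}$; for $d\in\mathcal{T}_C(x^* )$, outer second-order tangent set $\mathcal{T}^2_C(x^*;d)=\{w:\exists t_k\downarrow0,w^k\to w, x^*+t_kd+\frac12t_k^2w^k\in C\}$; $C$ is outer second-order regular at $x^*$ in direction $d$ if for every sequence $x^*+t_kd+\frac12t_k^2w^k\in C$ with $t_k\downarrow0$, $t_kw^k\to0$, one has $\mathrm{dist}(w^k,\mathcal{T}^2_C(x^*;d))\to0$. MSCQ for $\Psi$ holds at $x^*$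 if there exist a neighborhood $U$ of $x^*$ and $\kappa>0$ with $\mathrm{dist}(x,\Psi)\le\kappa\,\mathrm{dist}(G(x),K)$ for all $x\in U$. The optimal value of a problem is the infimum of its objective over its feasible set. *)

(* Defs.v *)
From HB Require Import structures.
From mathcomp Require Import all_boot all_order all_algebra.
From mathcomp Require Import all_classical all_reals all_analysis.
Set Implicit Arguments. Unset Strict Implicit. Unset Printing Implicit Defensive.
Import Order.TTheory GRing.Theory Num.Theory.
Import numFieldNormedType.Exports.
Local Open Scope classical_set_scope.
Local Open Scope ring_scope.

Section Defs.
Context {R : realType}.

Definition dq1 {V W : normedModType R} (g : V -> W) (x d : V) : R -> W :=
  fun t => t^-1 *: (g (x + t *: d) - g x).

Definition has_dir_deriv {V W : normedModType R} (g : V -> W) (x d : V) (l : W) :=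
  dq1 g x d t @[t --> 0^'+] --> l.

Definition dir_deriv {V W : normedModType R} (g : V -> W) (x d : V) : W :=
  lim (dq1 g x d t @[t --> 0^'+]).

Definition dq2 {V W : normedModType R} (g : V -> W) (x d w : V) : R -> W :=
  fun t => (2 / t ^+ 2) *:
    (g (x + t *: d + (2^-1 * t ^+ 2) *: w) - g x - t *: dir_deriv g x d).

Definition dir_deriv2 {V W : normedModType R} (g : V -> W) (x d w : V) : W :=
  lim (dq2 g x d w t @[t --> 0^'+]).

Definition sodd {V W : normedModType R} (g : V -> W) (x : V) :=
  forall d, has_dir_deriv g x d (dir_deriv g x d) /\
    forall w, dq2 g x d w t @[t --> 0^'+] --> dir_deriv2 g x d w.

Definition loc_lipschitz_at {V W : normedModType R} (g : V -> W) (x : V) :=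
  exists U, nbhs x U /\ exists L : R,
    forall y z, U y -> U z -> `|g y - g z| <= L * `|y - z|.

Definition adm_path {V : normedModType R} (w : R -> V) :=
  t *: w t @[t --> 0^'+] --> (0 : V).

Definition small_o2 {W : normedModType R} (r : R -> W) :=
  (t ^+ 2)^-1 *: r t @[t --> 0^'+] --> (0 : W).

Definition so_gph_regular {V W : normedModType R} (g : V -> W) (x : V) :=
  loc_lipschitz_at g x /\ sodd g x /\
  forall (d : V) (w : R -> V), adm_path w ->
    exists r : R -> W, small_o2 r /\
      forall t, 0 <= t ->
        g (x + t *: d + (2^-1 * t ^+ 2) *: w t) =
        g x + t *: dir_deriv g x d + (2^-1 * t ^+ 2) *: dir_deriv2 g x d (w t) + r t.

Definition so_epi_regular {V : normedModType R} (g : V -> R^o) (x : V) :=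
  loc_lipschitz_at g x /\ sodd g x /\
  forall (d : V) (w : R -> V), adm_path w ->
    exists r : R -> R^o, small_o2 r /\
      forall t, 0 <= t ->
        g (x + t *: d + (2^-1 * t ^+ 2) *: w t) >=
        g x + t * dir_deriv g x d + (2^-1 * t ^+ 2) * dir_deriv2 g x d (w t) + r t.

Definition tangent_cone {V : normedModType R} (C : set V) (x : V) : set V :=
  [set d | exists (t : nat -> R) (dk : nat -> V),
     (forall k, 0 < t k) /\ t @ \oo --> 0 /\ dk @ \oo --> d /\
     forall k, C (x + t k *: dk k)].

Definition tangent2 {V : normedModType R} (C : set V) (x d : V) : set V :=
  [set w | exists (t : nat -> R) (wk : nat -> V),
     (forall k, 0 < t k) /\ t @ \oo --> 0 /\ wk @ \oo --> w /\
     forall k, C (x + t k *: d + (2^-1 * t k ^+ 2) *: wk k)].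

(* distance to a set, in the extended reals (+oo for the empty set) *)
Definition edist {V : normedModType R} (x : V) (S : set V) : \bar R :=
  ereal_inf [set (`|x - y|)%:E | y in S].

Definition outer_so_regular {V : normedModType R} (C : set V) (x d : V) :=
  forall (t : nat -> R) (wk : nat -> V),
    (forall k, 0 < t k) -> t @ \oo --> 0 ->
    (fun k => t k *: wk k) @ \oo --> (0 : V) ->
    (forall k, C (x + t k *: d + (2^-1 * t k ^+ 2) *: wk k)) ->
    (fun k => edist (wk k) (tangent2 C x d)) @ \oo --> 0%E.

Definition MSCQ {V W : normedModType R} (G : V -> W) (K : set W) (xs : V) :=
  exists U, nbhs xs U /\ exists kappa : R, 0 < kappa /\
    forall x, U x ->
      (edist x [set y | K (G y)] <= kappa%:E * edist (G x) K)%E.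

Definition crit_cone {V W : normedModType R} (f : V -> R^o) (G : V -> W)
    (K : set W) (xs : V) : set V :=
  [set d | tangent_cone K (G xs) (dir_deriv G xs d) /\ dir_deriv f xs d <= 0].

Definition so_value {V W : normedModType R} (f : V -> R^o) (G : V -> W)
    (K : set W) (xs d : V) : \bar R :=
  ereal_inf [set (dir_deriv2 f xs d w)%:E | w in
    [set w | tangent2 K (G xs) (dir_deriv G xs d) (dir_deriv2 G xs d w)]].

End Defs.

(* Main.v *)
Require Import Defs.
From HB Require Import structures.
From mathcomp Require Import all_boot all_order all_algebra.
From mathcomp Require Import all_classical all_reals all_analysis.
From mathcomp Require Import ring lra.
Import Order.TTheory GRing.Theory Num.Theory.
Import numFieldNormedType.Exports.
Local Open Scope classical_set_scope.
Local Open Scope ring_scope.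
Section Helpers.
Context {R : realType}.

Lemma seq_right (t : nat -> R) : (forall k, 0 < t k) -> t @ \oo --> 0 ->
  t @ \oo --> (0:R)^'+.
Proof.
move=> tp t0 A HA.
have : \forall k \near \oo, 0 < t k -> A (t k) := t0 _ HA.
by apply: filterS => k H; apply: H; exact: tp.
Qed.

Lemma squeeze {T : Type} {F : set_system T} {FF : Filter F} {W : normedModType R}
  (a : T -> W) (l : W) (b : T -> R) :
  b @ F --> 0 -> (\forall i \near F, `|a i - l| <= b i) -> a @ F --> l.
Proof.
move=> hb hab; apply/cvgrPdist_lt => e e0.
have hb' := (cvgrPdist_lt _ _).1 hb e e0.
near=> i.
have h1 : `|a i - l| <= b i by near: i; exact: hab.
have h2 : `|0 - b i| < e by near: i; exact: hb'.
rewrite distrC (le_lt_trans h1) //; apply: le_lt_trans h2.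
by rewrite sub0r normrN ler_norm.
Unshelve. all: by end_near.
Qed.

Lemma path_to_x {V : normedModType R} (x d : V) (w : R -> V) : adm_path w ->
  (fun t => x + t *: d + (2^-1 * t ^+ 2) *: w t) @ (0:R)^'+ --> x.
Proof.
move=> hw.
have id0 : (fun t : R => t) @ (0:R)^'+ --> (0:R).
  by apply: cvg_at_right_filter; exact: cvg_id.
rewrite -[x in _ --> x]addr0 -[x in _ --> x + _]addr0.
apply: cvgD; first apply: cvgD; first exact: cvg_cst.
  by rewrite -(scale0r d); apply: cvgZ => //; exact: cvg_cst.
have -> : (fun t => (2^-1 * t ^+ 2) *: w t) = (fun t => (2^-1 * t) *: (t *: w t)).
  by apply/funext => t; rewrite scalerA expr2 mulrA.
rewrite -(scale0r (0:V)); apply: cvgZ => //.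
rewrite -[X in _ --> X](mulr0 (2^-1 : R)); exact: (cvgM (cvg_cst _) id0).
Qed.

End Helpers.
Section H2.
Context {R : realType}.
Lemma algA {W : zmodType} (a b c e : W) : (a - c - e) - (b - c - e) = a - b.
Proof. by rewrite -[a - c - e]addrA -[b - c - e]addrA -opprD opprB subrKA. Qed.
Lemma algB {W : zmodType} (p a b : W) : (p + a) - (p + b) = a - b.
Proof. by rewrite [p + a]addrC addrKA. Qed.
End H2.
Section H3.
Context {R : realType}.

Lemma id_right : (fun t : R => t) @ (0:R)^'+ --> (0:R).
Proof. by apply: cvg_at_right_filter; exact: cvg_id. Qed.

Lemma adm_cst {V : normedModType R} (w : V) : adm_path (fun=> w).
Proof.
rewrite /adm_path -(scale0r w); apply: cvgZ; [exact: id_right | exact: cvg_cst].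
Qed.

Lemma dd2_lip {V W : normedModType R} (g : V -> W) x U L :
  nbhs x U -> (forall y z, U y -> U z -> `|g y - g z| <= L * `|y - z|) ->
  sodd g x ->
  forall d w w', `|dir_deriv2 g x d w - dir_deriv2 g x d w'| <= L * `|w - w'|.
Proof.
move=> hU hL hs d w w'.
have [_ h2] := hs d.
have n1 := @path_to_x _ _ x d _ (adm_cst w).
have n2 := @path_to_x _ _ x d _ (adm_cst w').
apply: (ler_cvg_to (a := (0:R)^'+) (f := fun t => `|dq2 g x d w t - dq2 g x d w' t|)
   (g := fun=> L * `|w - w'|)).
- exact: (cvg_norm (cvgB (h2 w) (h2 w'))).
- exact: cvg_cst.
near=> t.
have U1 : U (x + t *: d + (2^-1 * t ^+ 2) *: w) by near: t; exact: n1 _ hU.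
have U2 : U (x + t *: d + (2^-1 * t ^+ 2) *: w') by near: t; exact: n2 _ hU.
have t0 : 0 < t by near: t; exact: nbhs_right_gt.
rewrite /dq2 -scalerBr algA normrZ.
apply: le_trans (ler_wpM2l (normr_ge0 _) (hL _ _ U1 U2)) _.
rewrite algB -scalerBr normrZ.
have c0 : 0 < 2 / t ^+ 2 by rewrite divr_gt0 // exprn_gt0.
have a0 : 0 < 2^-1 * t ^+ 2 by rewrite mulr_gt0 // exprn_gt0.
rewrite -normrM (gtr0_norm c0) normrZ (gtr0_norm a0).
rewrite [X in X <= _](_ : _ = L * `|w - w'|) //.
by field; rewrite gt_eqF.
Unshelve. all: by end_near.
Qed.

Lemma dir_seq {V W : normedModType R} (g : V -> W) x U L d (T : nat -> R) (D : nat -> V) :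
  nbhs x U -> (forall y z, U y -> U z -> `|g y - g z| <= L * `|y - z|) ->
  has_dir_deriv g x d (dir_deriv g x d) ->
  (forall k, 0 < T k) -> T @ \oo --> 0 -> D @ \oo --> d ->
  (fun k => (T k)^-1 *: (g (x + T k *: D k) - g x)) @ \oo --> dir_deriv g x d.
Proof.
move=> hU hL hd Tp T0 Dd.
have Tr := seq_right T Tp T0.
have c1 : (fun k => dq1 g x d (T k)) @ \oo --> dir_deriv g x d.
  exact: (cvg_comp _ _ Tr hd).
have p1 : (fun k => x + T k *: D k) @ \oo --> x.
  rewrite -[x in _ --> x]addr0; apply: cvgD; first exact: cvg_cst.
  by rewrite -(scale0r d); apply: cvgZ.
have p2 : (fun k => x + T k *: d) @ \oo --> x.
  rewrite -[x in _ --> x]addr0; apply: cvgD; first exact: cvg_cst.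
  by rewrite -(scale0r d); apply: cvgZ => //; exact: cvg_cst.
apply: (squeeze _ _ (fun k => `|dq1 g x d (T k) - dir_deriv g x d| + L * `|D k - d|)).
  rewrite -[X in _ --> X](addr0 0); apply: cvgD.
    rewrite -(normr0 W); apply: cvg_norm.
    by rewrite -(subrr (dir_deriv g x d)); apply: cvgB => //; exact: cvg_cst.
  rewrite -(mulr0 L); apply: (cvgM (cvg_cst _)).
  rewrite -(normr0 V); apply: cvg_norm.
  by rewrite -(subrr d); apply: cvgB => //; exact: cvg_cst.
near=> k.
have U1 : U (x + T k *: D k) by near: k; exact: p1 _ hU.
have U2 : U (x + T k *: d) by near: k; exact: p2 _ hU.
have -> : (T k)^-1 *: (g (x + T k *: D k) - g x) - dir_deriv g x d =
   (dq1 g x d (T k) - dir_deriv g x d) + (T k)^-1 *: (g (x + T k *: D k) - g (x + T k *: d)).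
  rewrite /dq1 addrAC -scalerDr; congr (_ - _); congr (_ *: _).
  by rewrite [RHS]addrC [RHS]addrA subrK.
apply: le_trans (ler_normD _ _) _; rewrite lerD2l normrZ.
apply: le_trans (ler_wpM2l (normr_ge0 _) (hL _ _ U1 U2)) _.
rewrite algB -scalerBr normrZ (gtr0_norm (Tp k)) gtr0_norm ?invr_gt0 //.
rewrite [X in X <= _](_ : _ = L * `|D k - d|) //.
by field; rewrite gt_eqF.
Unshelve. all: by end_near.

Qed.

End H3.
Section H4.
Context {R : realType}.

Lemma phi_ge (phi : nat -> nat) : (forall i, (phi i < phi i.+1)%N) -> forall i, (i <= phi i)%N.
Proof. by move=> hp; elim=> // i IH; apply: leq_ltn_trans IH (hp i). Qed.

Lemma subseq_cvg {X : Type} (u : nat -> X) (G : set_system X) (phi : nat -> nat) :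
  (forall i, (phi i < phi i.+1)%N) -> u @ \oo --> G -> (u \o phi) @ \oo --> G.
Proof.
move=> hp hu; apply: (cvg_comp _ _ _ hu) => P [N _ HN].
exists N => // i /= Hi; apply: HN; rewrite /=; exact: leq_trans Hi (phi_ge _ hp i).
Qed.

Lemma dec_mono (t : nat -> R) : (forall k, t k.+1 < t k) ->
  forall i j, (i < j)%N -> t j < t i.
Proof.
move=> ht i; elim=> // j IH; rewrite ltnS leq_eqVlt => /orP [/eqP ->|/IH h].
  exact: ht.
exact: lt_trans (ht j) h.
Qed.

Lemma dec_sub (t : nat -> R) (phi : nat -> nat) : (forall k, t k.+1 < t k) ->
  (forall i, (phi i < phi i.+1)%N) -> forall i, t (phi i.+1) < t (phi i).
Proof. by move=> ht hp i; apply: dec_mono. Qed.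

Lemma mk_path {V : normedModType R} (t : nat -> R) (w : nat -> V) :
  (forall k, 0 < t k) -> (forall k, t k.+1 < t k) ->
  (fun k => t k *: w k) @ \oo --> (0:V) ->
  exists wp : R -> V, adm_path wp /\ forall k, wp (t k) = w k.
Proof.
move=> tp td hw.
have inj : forall k k', t k' = t k -> k' = k.
  move=> k k' e; have [kk|kk|//] := ltngtP k' k.
    by move: (dec_mono _ td _ _ kk); rewrite e ltxx.
  by move: (dec_mono _ td _ _ kk); rewrite e ltxx.
pose wp s := if pselect (exists k, t k = s) is left H then w (projT1 (cid H)) else 0.
exists wp; split; last first.
  move=> k; rewrite /wp; case: pselect => [H|nH]; last by exfalso; apply: nH; exists k.
  by case: cid => k' /= e; rewrite (inj _ _ e).
apply/cvgrPdist_lt => e e0.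
have [N _ HN] := (cvgrPdist_lt _ _).1 hw e e0.
near=> s.
have sN : s < t N by near: s; apply: nbhs_right_lt; exact: tp.
rewrite /wp; case: pselect => [H|_]; last by rewrite scaler0 subr0 normr0.
case: cid => k /= tk; rewrite -tk.
apply: HN => /=; rewrite leqNgt; apply/negP => kN.
by move: (dec_mono _ td _ _ kN); rewrite tk => /(lt_trans sN); rewrite ltxx.
Unshelve. all: by end_near.
Qed.

Lemma clus_sub {V : normedModType R} (u : nat -> V) p : cluster (u @ \oo) p ->
  exists phi : nat -> nat, (forall i, (phi i < phi i.+1)%N) /\ (u \o phi) @ \oo --> p.
Proof.
move=> Hc.
have /choice [nx Hnx] : forall Nj : nat * nat, exists k,
    (Nj.1 <= k)%N /\ `|p - u k| < (Nj.2.+1%:R)^-1.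
  move=> [N j].
  have [] := Hc (u @` [set k | (N <= k)%N]) (ball p (j.+1%:R^-1)).
  - by exists N => // k /= Hk; exists k.
  - by apply: nbhsx_ballx; rewrite invr_gt0 ltr0n.
  move=> v [[k Hk <-] Hb]; exists k; split => //.
  by move: Hb; rewrite -ball_normE.
pose phi := fix phi i := match i with 0 => nx (0, 0)%N | i'.+1 => nx ((phi i').+1, i'.+1) end.
exists phi; split.
  by move=> i /=; have [] := Hnx ((phi i).+1, i.+1).
apply: (squeeze _ _ (fun i => (i.+1%:R)^-1)).
  exact: cvg_harmonic.
apply: nearW => i; rewrite distrC; apply: ltW.
by case: i => [|i] /=; [case: (Hnx (0, 0)%N) | case: (Hnx ((phi i).+1, i.+1))].
Qed.

Lemma bw {n} (u : nat -> 'rV[R]_n) B : (forall k, `|u k| <= B) ->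
  exists phi : nat -> nat, (forall i, (phi i < phi i.+1)%N) /\
    exists l : 'rV[R]_n, (u \o phi) @ \oo --> l.
Proof.
move=> hu.
have cA : compact [set v : 'rV[R]_n | `|v| <= B].
  apply: bounded_closed_compact.
    exists B; split; first exact: num_real.
    by move=> M HM v /= hv; apply: le_trans hv (ltW HM).
  have := @preimage_closed _ _ (fun v : 'rV[R]_n => `|v|) [set x : R | x <= B].
  move=> H; apply: H.
    by move=> v _; exact: norm_continuous.
  exact: closed_le.
have Fu : (u @ \oo) [set v | `|v| <= B] by exists 0%N => // k _; exact: hu.
have [p [_ Hp]] := cA (u @ \oo) _ Fu.
have [phi [Hphi Hc]] := clus_sub _ _ Hp.
by exists phi; split => //; exists p.
Qed.

Lemma edist_le {V : normedModType R} (x y : V) (S : set V) : S y ->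
  (Defs.edist x S <= (`|x - y|)%:E)%E.
Proof. by move=> Sy; apply: ereal_inf_lbound; exists y. Qed.

Lemma edist_lt {V : normedModType R} (x : V) (S : set V) (a : R) :
  (Defs.edist x S < a%:E)%E -> exists y, S y /\ `|x - y| < a.
Proof.
by move=> /ereal_inf_lt [_ [y Sy <-]]; rewrite lte_fin => h; exists y.
Qed.

End H4.
Section H5.
Context {R : realType}.

Lemma algC {W : zmodType} (a b c : W) : a + b + (c - a - b) = c.
Proof. by rewrite -[c - a - b]addrA -opprD [LHS]addrC subrK. Qed.

Lemma algD {W : zmodType} (p y : W) : p + (y - p) = y.
Proof. by rewrite [LHS]addrC subrK. Qed.

Lemma algE {W : zmodType} (a b c d e : W) : a + b + c + e - (a + b + d) = c - d + e.
Proof. by rewrite -[a + b + c + e]addrA algB addrAC. Qed.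

Lemma algH {W : zmodType} (x y z : W) : x - (y + z) + z = x - y.
Proof. by rewrite opprD addrA subrK. Qed.
Lemma algF {W : zmodType} (a b c e f : W) : a - b - c = (a - (b + c + e + f)) + (e + f).
Proof. by rewrite -[b + c + e + f]addrA algH opprD addrA. Qed.
Lemma algG {W : zmodType} (A g r : W) : A + (g + r) - g = A + r.
Proof. by rewrite addrCA addrAC subrr add0r. Qed.

Lemma sc1 (t : R) : t != 0 -> (2^-1 * t ^+ 2) * (2 / t ^+ 2) = 1.
Proof. by move=> t0; field. Qed.

Lemma sc2 (t : R) : t != 0 -> (2 / t ^+ 2) * (2^-1 * t ^+ 2) = 1.
Proof. by move=> t0; field. Qed.

Lemma lemC {n m : nat} (K : set 'rV[R]_m) (G : 'rV[R]_n -> 'rV[R]_m) xs U kappa UG LG :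
  K (G xs) -> so_gph_regular G xs ->
  nbhs xs UG -> (forall y z, UG y -> UG z -> `|G y - G z| <= LG * `|y - z|) ->
  nbhs xs U -> 0 < kappa ->
  (forall x, U x -> (Defs.edist x [set y | K (G y)] <= kappa%:E * Defs.edist (G x) K)%E) ->
  forall d w v eta, 0 < eta -> tangent2 K (G xs) (dir_deriv G xs d) v ->
  exists u, tangent2 K (G xs) (dir_deriv G xs d) (dir_deriv2 G xs d u) /\
     `|u - w| <= kappa * `|dir_deriv2 G xs d w - v| + eta.
Proof.
move=> KG [_ [hs hreg]] hUG hLG hU k0 hM d w v eta e0 [tau [vj [tp [t0 [vv hK]]]]].
set G1 := dir_deriv G xs d.
set G2 := dir_deriv2 G xs d.
have [r [ro hr]] := hreg d _ (adm_cst w).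
pose p j := xs + tau j *: d + (2^-1 * tau j ^+ 2) *: w.
pose rho j := (tau j ^+ 2)^-1 *: r (tau j).
have trr := seq_right tau tp t0.
have rho0 : rho @ \oo --> 0 := cvg_comp _ _ trr ro.
have pconv : p @ \oo --> xs := cvg_comp _ _ trr (@path_to_x _ _ xs d _ (adm_cst w)).
pose c j := `|G2 w - vj j + 2 *: rho j|.
pose a := `|G2 w - v|.
have cconv : c @ \oo --> a.
  apply: cvg_norm; rewrite -[X in _ --> X]addr0 -(scaler0 _ 2).
  apply: cvgD; last by apply: cvgZ => //; exact: cvg_cst.
  by apply: cvgB => //; exact: cvg_cst.
have [N1 _ HN1] : \forall j \near \oo, U (p j) := pconv _ hU.
have [N2 _ HN2'] := (cvgrPdist_lt _ _).1 cconv 1 ltr01.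
have HN2 : forall j, (N2 <= j)%N -> c j <= a + 1.
  move=> j /HN2' /= h.
  have h2 : c j - a <= `|a - c j| by rewrite distrC ler_norm.
  by have := le_lt_trans h2 h; rewrite ltrBlDl => /ltW; rewrite addrC.
pose N := maxn N1 N2.
have key : forall j, exists y, K (G y) /\ ((N <= j)%N ->
    `|p j - y| < 2^-1 * tau j ^+ 2 * (kappa * c j + eta / 2)).
  move=> j; case: (leqP N j) => hj; last by exists xs; split => // /(leq_trans hj); rewrite ltnn.
  have hj1 : (N1 <= j)%N by apply: leq_trans hj; exact: leq_maxl.
  have tj := tp j; have tj0 : tau j != 0 by rewrite gt_eqF.
  have hG : G (p j) = G xs + tau j *: G1 + (2^-1 * tau j ^+ 2) *: G2 w + r (tau j).
    by rewrite hr // ltW.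
  have e1 : (Defs.edist (G (p j)) K <= (2^-1 * tau j ^+ 2 * c j)%:E)%E.
    apply: le_trans (edist_le _ _ _ (hK j)) _; rewrite lee_fin le_eqVlt; apply/orP; left; apply/eqP.
    have hpos : 0 <= 2^-1 * tau j ^+ 2 by rewrite mulr_ge0 // exprn_ge0 // ltW.
    rewrite hG /c -[X in _ = X * _](ger0_norm hpos) -normrZ; congr `|_|.
    rewrite algE scalerDr scalerBr /rho !scalerA.
    by rewrite sc1 // scale1r.
  have e2 := hM (p j) (HN1 j hj1).
  have e3 : (Defs.edist (p j) [set y | K (G y)] <
      (2^-1 * tau j ^+ 2 * (kappa * c j + eta / 2))%:E)%E.
    apply: le_lt_trans e2 _.
    apply: le_lt_trans (lee_wpmul2l _ e1) _; first by rewrite lee_fin ltW.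
    rewrite -EFinM lte_fin mulrDr ltr_pwDr.
    - done.
    - by rewrite !mulr_gt0 ?divr_gt0 ?exprn_gt0 ?invr_gt0.
    - by rewrite mulrCA.
  have [y [Ky hy]] := edist_lt _ _ _ e3.
  by exists y; split => // _.
have /choice [y Hy] := key.
pose u j := if (N <= j)%N then w + (2 / tau j ^+ 2) *: (y j - p j) else w.
have ub : forall j, (N <= j)%N -> `|u j - w| < kappa * c j + eta / 2.
  move=> j hj; rewrite /u hj addrC addKr normrZ.
  have tj := tp j; have tj0 : tau j != 0 by rewrite gt_eqF.
  rewrite gtr0_norm ?divr_gt0 ?exprn_gt0 //.
  have := (Hy j).2 hj; rewrite distrC => h.
  rewrite -(ltr_pM2l (_ : 0 < 2^-1 * tau j ^+ 2)) ?mulr_gt0 ?exprn_gt0 //.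
  by rewrite mulrA sc1 // mul1r.
have ubd : forall j, `|u j| <= `|w| + (kappa * (a + 1) + eta / 2).
  move=> j; case: (leqP N j) => hj.
    rewrite -[u j](subrK w) addrC; apply: le_trans (ler_normD _ _) _.
    rewrite lerD2l; apply/ltW; apply: lt_le_trans (ub j hj) _.
    rewrite lerD2r; apply: ler_wpM2l; first exact: ltW.
    apply: HN2.
    by apply: leq_trans hj; exact: leq_maxr.
  rewrite /u leqNgt hj /= lerDl.
  apply: addr_ge0; last by apply: divr_ge0; [exact: ltW | exact: ler0n].
  by apply: mulr_ge0; [exact: ltW | exact: addr_ge0 (normr_ge0 _) ler01].
have [phi [hphi [us hus]]] := bw u _ ubd.
have cphi : (fun i => c (phi i)) @ \oo --> a := subseq_cvg _ _ _ hphi cconv.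
exists us; split; last first.
  have fconv : (fun i => `|u (phi i) - w|) @ \oo --> `|us - w|.
    exact: (cvg_norm (cvgB hus (cvg_cst w))).
  have gconv : (fun i => kappa * c (phi i) + eta / 2) @ \oo --> kappa * a + eta / 2.
    exact: (cvgD (cvgM (cvg_cst _) cphi) (cvg_cst _)).
  have h : `|us - w| <= kappa * a + eta / 2.
    apply: (ler_cvg_to fconv gconv).
    exists N => // i /= hi; apply: ltW; apply: ub.
    exact: leq_trans hi (phi_ge _ hphi i).
  apply: le_trans h _; rewrite lerD2l.
  have : eta / 2 <= eta by lra.
  by [].
pose tau' i := tau (phi i).
have [r2 [ro2 hr2]] := hreg d _ (adm_cst us).
pose rho2 i := (tau' i ^+ 2)^-1 *: r2 (tau' i).
have t'p : forall i, 0 < tau' i by move=> i; exact: tp.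
have t'0 : tau' @ \oo --> 0 := subseq_cvg _ _ _ hphi t0.
have trr' := seq_right tau' t'p t'0.
have rho20 : rho2 @ \oo --> 0 := cvg_comp _ _ trr' ro2.
pose z i := (2 / tau' i ^+ 2) *: (G (y (phi i)) - G xs - tau' i *: G1).
exists tau', z; split => //; split => //; split; last first.
  move=> i; rewrite /z scalerA sc1 ?gt_eqF // scale1r algC; exact: (Hy _).1.
pose Y i := xs + tau' i *: d + (2^-1 * tau' i ^+ 2) *: u (phi i).
pose q i := xs + tau' i *: d + (2^-1 * tau' i ^+ 2) *: us.
have s0 : (fun i => 2^-1 * tau' i ^+ 2) @ \oo --> 0.
  rewrite -(mulr0 (2^-1 : R)); apply: (cvgM (cvg_cst _)).
  have -> : (fun i => tau' i ^+ 2) = (fun i => tau' i * tau' i).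
    by apply/funext => i; rewrite expr2.
  rewrite -[X in _ --> X](mulr0 (0:R)); exact: (cvgM t'0 t'0).
have Yc : Y @ \oo --> xs.
  rewrite /Y.
  suff : (fun i => xs + tau' i *: d + (2^-1 * tau' i ^+ 2) *: u (phi i)) @ \oo --> xs + 0 + 0.
    by rewrite !addr0.
  apply: cvgD; first apply: cvgD; first exact: cvg_cst.
    by rewrite -(scale0r d); apply: cvgZ => //; exact: cvg_cst.
  by rewrite -(scale0r us); apply: cvgZ.
have qc : q @ \oo --> xs := cvg_comp _ _ trr' (@path_to_x _ _ xs d _ (adm_cst us)).
have [M1 _ HM1] := Yc _ hUG.
have [M2 _ HM2] := qc _ hUG.
apply: (squeeze _ _ (fun i => LG * `|u (phi i) - us| + 2 * `|rho2 i|)).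
  have h1 : (fun i => `|u (phi i) - us|) @ \oo --> `|us - us|.
    exact: (cvg_norm (cvgB hus (cvg_cst us))).
  rewrite subrr normr0 in h1.
  have h2 : (fun i => `|rho2 i|) @ \oo --> `|0 : 'rV[R]_m| by exact: cvg_norm.
  rewrite normr0 in h2.
  suff : (fun i => LG * `|u (phi i) - us| + 2 * `|rho2 i|) @ \oo --> LG * 0 + 2 * 0.
    by rewrite !mulr0 addr0.
  by apply: cvgD; apply: cvgM => //; exact: cvg_cst.
exists (maxn N (maxn M1 M2)) => // i /= hi.
have hiN : (N <= phi i)%N.
  apply: leq_trans (phi_ge _ hphi i); apply: leq_trans hi; exact: leq_maxl.
have hiM : (maxn M1 M2 <= i)%N by apply: leq_trans hi; exact: leq_maxr.
have hM1 : (M1 <= i)%N by apply: leq_trans hiM; exact: leq_maxl.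
have hM2 : (M2 <= i)%N by apply: leq_trans hiM; exact: leq_maxr.
have ti := t'p i; have ti0 : tau' i != 0 by rewrite gt_eqF.
have yY : y (phi i) = Y i.
  rewrite /Y /u hiN scalerDr addrA scalerA sc1 // scale1r.
  exact: (esym (algD (p (phi i)) _)).
have hG2 : G (q i) = G xs + tau' i *: G1 + (2^-1 * tau' i ^+ 2) *: G2 us + r2 (tau' i).
  exact: (hr2 _ (ltW ti)).
have ez : z i - G2 us = (2 / tau' i ^+ 2) *: (G (Y i) - G (q i)) + 2 *: rho2 i.
  rewrite /z yY (algF _ _ _ ((2^-1 * tau' i ^+ 2) *: G2 us) (r2 (tau' i))) -hG2.
  rewrite scalerDr (scalerDr (2 / tau' i ^+ 2) _ (r2 (tau' i))) scalerA sc2 // scale1r.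
  by rewrite algG /rho2 scalerA.
rewrite ez; apply: le_trans (ler_normD _ _) _; apply: lerD.
  rewrite normrZ gtr0_norm ?divr_gt0 ?exprn_gt0 //.
  apply: le_trans (ler_wpM2l _ (hLG _ _ (HM1 _ hM1) (HM2 _ hM2))) _.
    by rewrite divr_ge0 ?exprn_ge0 ?ltW.
  rewrite /Y /q algB -scalerBr normrZ gtr0_norm ?mulr_gt0 ?exprn_gt0 //.
  rewrite [X in X <= _](_ : _ = LG * `|u (phi i) - us|) //.
  by field.
by rewrite normrZ ger0_norm.
Qed.

End H5.
Lemma algI {W : zmodType} (a b c : W) : a + b + (c - b) = a + c.
Proof. by rewrite -addrA [b + _]addrCA subrr addr0. Qed.

Lemma sc3 {R : realType} (t : R) : t != 0 -> 2^-1 * t ^+ 2 * (2 / t) = t.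
Proof. by move=> t0; field. Qed.

Lemma pos_from_f {R : realType} {V : normedModType R} (f : V -> R^o) x xs c :
  f x < f xs + c * `|x - xs| ^+ 2 -> 0 < `|x - xs|.
Proof.
move=> H; rewrite lt_neqAle normr_ge0 andbT; apply/eqP => h0.
have e : x = xs by apply/eqP; rewrite -subr_eq0 -normr_eq0 -h0.
by move: H; rewrite -h0 expr0n /= mulr0 addr0 e ltxx.
Qed.

Theorem corollary3p1 (R : realType) (n m : nat) (K : set 'rV[R]_m)
  (f : 'rV[R]_n -> R^o) (G : 'rV[R]_n -> 'rV[R]_m) (xs : 'rV[R]_n) :
  closed K ->
  K (G xs) ->
  so_epi_regular f xs ->
  so_gph_regular G xs ->
  MSCQ G K xs ->
  (forall d, tangent_cone K (G xs) (dir_deriv G xs d) ->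
     outer_so_regular K (G xs) (dir_deriv G xs d)) ->
  (forall d, tangent_cone K (G xs) (dir_deriv G xs d) -> 0 <= dir_deriv f xs d) ->
  (forall d, crit_cone f G K xs d -> d != 0 -> (0 < so_value f G K xs d)%E) ->
  exists c : R, 0 < c /\ exists N, nbhs xs N /\
    forall x, K (G x) -> N x -> f xs + c * `|x - xs| ^+ 2 <= f x.
Proof.
move=> Kc KG hfr hGr [U [hU [kappa [k0 hM]]]] hout hf1 hso.
have [[Uf [hUf [Lf0 hLf0]]] [sf hepi]] := hfr.
have [[UG [hUG [LG0 hLG0]]] [sG hgph]] := hGr.
pose Lf := `|Lf0|; pose LG := `|LG0|.
have hLf : forall y z, Uf y -> Uf z -> `|f y - f z| <= Lf * `|y - z|.
  move=> y z Uy Uz; apply: le_trans (hLf0 _ _ Uy Uz) _.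
  by apply: ler_wpM2r => //; exact: ler_norm.
have hLG : forall y z, UG y -> UG z -> `|G y - G z| <= LG * `|y - z|.
  move=> y z Uy Uz; apply: le_trans (hLG0 _ _ Uy Uz) _.
  by apply: ler_wpM2r => //; exact: ler_norm.
have Lf_ge0 : 0 <= Lf by exact: normr_ge0.
have LG_ge0 : 0 <= LG by exact: normr_ge0.
apply: contrapT => hneg.
have H' : forall (k : nat) (r : R), exists x, 0 < r -> K (G x) /\ `|x - xs| < r /\
    f x < f xs + (k.+1%:R)^-1 * `|x - xs| ^+ 2.
  move=> k r; case: (ltrP 0 r) => r0; last first.
    by exists xs.
  apply: contrapT => hne; apply: hneg; exists (k.+1%:R^-1); split.
    by rewrite invr_gt0 ltr0n.
  exists (ball xs r); split; first exact: nbhsx_ballx.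
  move=> x Kx bx; rewrite leNgt; apply/negP => hlt; apply: hne; exists x => _.
  split => //; split => //.
  by move: bx; rewrite -ball_normE /= distrC.
have /choice [X HX] : forall p : nat * R, exists x, 0 < p.2 -> K (G x) /\
    `|x - xs| < p.2 /\ f x < f xs + (p.1.+1%:R)^-1 * `|x - xs| ^+ 2.
  by move=> [k r]; exact: H'.
pose xq := fix xq k := match k with
  | 0 => X (0%N, 1)
  | k'.+1 => X (k'.+1, Num.min (`|xq k' - xs| / 2) (k'.+2%:R^-1)) end.
have hx : forall k, [/\ K (G (xq k)), 0 < `|xq k - xs|, `|xq k - xs| < (k.+1%:R)^-1 &
    f (xq k) < f xs + (k.+1%:R)^-1 * `|xq k - xs| ^+ 2].
  elim=> [|k [_ tk _ _]].
    have [h1 [h2 h3]] := HX (0%N, 1) ltr01.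
    split => //; first by have hh := pos_from_f f _ _ _ h3; exact hh.
    by rewrite /= invr1.
  have mp : 0 < Num.min (`|xq k - xs| / 2) (k.+2%:R^-1).
    by rewrite lt_min divr_gt0 // invr_gt0 ltr0n.
  have [h1 [h2 h3]] := HX (k.+1, Num.min (`|xq k - xs| / 2) (k.+2%:R^-1)) mp.
  split => //; first by have hh := pos_from_f f _ _ _ h3; exact hh.
  by apply: lt_le_trans h2 _; rewrite ge_min lexx orbT.
pose t k := `|xq k - xs|.
have tp : forall k, 0 < t k by move=> k; have [] := hx k.
have tdec : forall k, t k.+1 < t k.
  move=> k; have mp : 0 < Num.min (t k / 2) (k.+2%:R^-1).
    by rewrite lt_min divr_gt0 // invr_gt0 ltr0n.
  have [h1 [h2 h3]] := HX (k.+1, Num.min (t k / 2) (k.+2%:R^-1)) mp.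
  rewrite /t /=; apply: lt_le_trans h2 _; rewrite ge_min; apply/orP; left.
  by rewrite ler_pdivrMr // ler_pMr // ler1n.
have t0 : t @ \oo --> 0.
  apply: (squeeze _ _ harmonic); first exact: cvg_harmonic.
  by apply: nearW => k; rewrite subr0 ger0_norm ?ltW //; have [] := hx k.
pose dq k := (t k)^-1 *: (xq k - xs).
have dq1 : forall k, `|dq k| <= 1.
  move=> k; rewrite /dq normrZ gtr0_norm ?invr_gt0 // mulVf //.
  by rewrite gt_eqF.
have [phi [hphi [dd hdd]]] := bw dq _ dq1.
pose T i := t (phi i).
pose D i := dq (phi i).
pose Xs i := xq (phi i).
have Tp : forall i, 0 < T i by move=> i; exact: tp.
have Tdec : forall i, T i.+1 < T i by move=> i; exact: (dec_sub t phi tdec hphi i).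
have T0 : T @ \oo --> 0 := subseq_cvg _ _ _ hphi t0.
have hdd' : D @ \oo --> dd := hdd.
have XsE : forall i, Xs i = xs + T i *: D i.
  move=> i; rewrite /D /dq scalerA mulfV ?scale1r ?gt_eqF //.
  by rewrite algD.
have KXs : forall i, K (G (Xs i)) by move=> i; have [] := hx (phi i).
have fXs : forall i, f (Xs i) < f xs + (i.+1%:R)^-1 * T i ^+ 2.
  move=> i; have [_ _ _ h] := hx (phi i); apply: lt_le_trans h _.
  rewrite lerD2l; apply: ler_wpM2r; first exact: exprn_ge0 (ltW (Tp i)).
  rewrite lef_pV2 ?posrE ?ltr0n // ler_nat ltnS; exact: phi_ge.
have ddn0 : dd != 0.
  apply/eqP => hd0.
  have h : (fun i => `|D i|) @ \oo --> `|dd| by exact: cvg_norm.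
  rewrite hd0 normr0 in h.
  have [N _ HN] := (cvgrPdist_lt _ _).1 h 1 ltr01.
  have := HN N (leqnn N); rewrite /= sub0r normrN normr_id.
  rewrite /D /dq normrZ gtr0_norm ?invr_gt0 // mulVf ?ltxx //.
  by rewrite gt_eqF.
have tanG : tangent_cone K (G xs) (dir_deriv G xs dd).
  exists T, (fun i => (T i)^-1 *: (G (xs + T i *: D i) - G xs)).
  split => //; split => //; split.
    exact: (dir_seq G xs UG LG dd T D hUG hLG (sG dd).1 Tp T0 hdd').
  move=> i; rewrite scalerA mulfV ?scale1r ?gt_eqF // algD -XsE; exact: KXs.
have f1le : dir_deriv f xs dd <= 0.
  have hc := dir_seq f xs Uf Lf dd T D hUf hLf (sf dd).1 Tp T0 hdd'.
  apply: (ler_cvg_to hc T0).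
  apply: nearW => i.
  rewrite -XsE.
  have h := fXs i.
  have : f (Xs i) - f xs < (i.+1%:R)^-1 * T i ^+ 2 by rewrite ltrBlDl.
  move=> h2.
  rewrite [X in X <= _](_ : _ = (T i)^-1 * (f (Xs i) - f xs)) //.
  apply: ltW; rewrite ltr_pdivrMl //.
  apply: lt_le_trans h2 _.
  rewrite expr2 mulrA; apply: ler_wpM2r; first exact: ltW.
  rewrite -[X in _ <= X]mul1r; apply: ler_wpM2r; first exact: ltW.
  by rewrite invf_le1 ?ler1n ?ltr0n.
have f1ge : 0 <= dir_deriv f xs dd := hf1 dd tanG.
have hcrit : crit_cone f G K xs dd by split.
have [dl [dl0 hdl]] : exists dl : R, 0 < dl /\ (dl%:E <= so_value f G K xs dd)%E.
  move: (hso dd hcrit ddn0); case: (so_value f G K xs dd) => [r | | ] //= hr.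
    by exists r; split => //; rewrite lte_fin in hr.
  by exists 1; split => //; exact: leey.
pose w i := (2 / T i) *: (D i - dd).
have Tw : (fun i => T i *: w i) @ \oo --> (0 : 'rV[R]_n).
  have -> : (fun i => T i *: w i) = (fun i => 2 *: (D i - dd)).
    by apply/funext => i; rewrite /w scalerA mulrCA mulfV ?mulr1 // gt_eqF.
  rewrite -(scaler0 _ 2) -(subrr dd); apply: cvgZ; first exact: cvg_cst.
  by apply: cvgB => //; exact: cvg_cst.
have [wp [admw wpT]] := mk_path T w Tp Tdec Tw.
have XsE2 : forall i, Xs i = xs + T i *: dd + (2^-1 * T i ^+ 2) *: wp (T i).
  move=> i; rewrite wpT /w scalerA sc3 ?gt_eqF // scalerBr algI; exact: XsE.
have TR := seq_right T Tp T0.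
have [rf [rfo hrf]] := hepi dd wp admw.
pose rhof i := (T i ^+ 2)^-1 * rf (T i).
have rhof0 : rhof @ \oo --> 0 := cvg_comp _ _ TR rfo.
pose eps i := 2 * (i.+1%:R)^-1 + 2 * `|rhof i|.
have epsc : eps @ \oo --> 0.
  have h : (fun i => `|rhof i|) @ \oo --> `|0:R| by exact: cvg_norm.
  rewrite normr0 in h.
  suff : eps @ \oo --> (2 * 0 + 2 * 0 : R) by rewrite mulr0 addr0.
  apply: cvgD; apply: cvgM => //; [exact: cvg_cst | exact: cvg_harmonic | exact: cvg_cst].
have f2w : forall i, dir_deriv2 f xs dd (w i) < eps i.
  move=> i; have h1 := hrf (T i) (ltW (Tp i)); rewrite -XsE2 wpT in h1.
  have h2 := fXs i.
  have eq : rf (T i) = T i ^+ 2 * rhof i.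
    by rewrite /rhof mulrA mulfV ?mul1r // expf_neq0 // gt_eqF.
  have h3 : 0 <= T i * dir_deriv f xs dd by rewrite mulr_ge0 // ltW.
  have h4 : - rhof i <= `|rhof i| by rewrite -normrN ler_norm.
  have h5 : 0 < T i ^+ 2 by rewrite exprn_gt0.
  rewrite /eps; move: h1 h2 h3 h4 h5 eq.
  move: (dir_deriv2 f xs dd (w i)) (T i ^+ 2) (rhof i) (rf (T i)) (f (Xs i)) (f xs).
  move: (T i * dir_deriv f xs dd) ((i.+1%:R)^-1 : R).
  move=> a c F2 s rh rr fX f0 h1 h2 h3 h4 h5 eq.
  nra.
have [rG [rGo hrG]] := hgph dd wp admw.
pose rhoG i := (T i ^+ 2)^-1 *: rG (T i).
have rhoG0 : rhoG @ \oo --> 0 := cvg_comp _ _ TR rGo.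
pose G2 := dir_deriv2 G xs dd.
pose v i := G2 (w i) + 2 *: rhoG i.
have Kv : forall i, K (G xs + T i *: dir_deriv G xs dd + (2^-1 * T i ^+ 2) *: v i).
  move=> i; have h := hrG (T i) (ltW (Tp i)); rewrite -XsE2 wpT in h.
  have ti0 : T i != 0 by rewrite gt_eqF.
  rewrite /v scalerDr /rhoG !scalerA [2^-1 * T i ^+ 2 * 2 * (T i ^+ 2)^-1](_ : _ = 1).
    by rewrite scale1r addrA -/G2 -h; exact: KXs.
  by field.
have lipG := dd2_lip G xs UG LG hUG hLG sG dd.
have Tv : (fun i => T i *: v i) @ \oo --> (0:'rV[R]_m).
  apply: (squeeze _ _ (fun i => T i * `|G2 0| + LG * `|T i *: w i| + 2 * (T i * `|rhoG i|))).
    have h1 : (fun i => `|T i *: w i|) @ \oo --> `|0 : 'rV[R]_n| by exact: cvg_norm.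
    have h2 : (fun i => `|rhoG i|) @ \oo --> `|0 : 'rV[R]_m| by exact: cvg_norm.
    rewrite normr0 in h1; rewrite normr0 in h2.
    suff : (fun i => T i * `|G2 0| + LG * `|T i *: w i| + 2 * (T i * `|rhoG i|)) @ \oo -->
       (0 * `|G2 0| + LG * 0 + 2 * (0 * 0) : R).
      by rewrite !mul0r mulr0 mulr0 !addr0.
    apply: cvgD; first apply: cvgD.
    - by apply: cvgM => //; exact: cvg_cst.
    - by apply: cvgM => //; exact: cvg_cst.
    - by apply: cvgM; [exact: cvg_cst | exact: cvgM].
  apply: nearW => i; rewrite subr0 /v scalerDr.
  apply: le_trans (ler_normD _ _) _; apply: lerD.
    rewrite normrZ (gtr0_norm (Tp i)) normrZ (gtr0_norm (Tp i)).
    have h : `|G2 (w i)| <= `|G2 0| + LG * `|w i|.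
      rewrite -[G2 (w i)](subrK (G2 0)) addrC; apply: le_trans (ler_normD _ _) _.
      by rewrite lerD2l; have := lipG (w i) 0; rewrite subr0.
    apply: le_trans (ler_wpM2l (ltW (Tp i)) h) _.
    by rewrite mulrDr mulrCA.
  by rewrite !normrZ (gtr0_norm (Tp i)) ger0_norm // mulrCA.
have hE := hout dd tanG T v Tp T0 Tv Kv.
have [hfin hfc] := (fine_cvgP _ 0).1 hE.
pose M := Lf * kappa + Lf + 1.
have M0 : 0 < M by rewrite /M ltr_pwDr // addr_ge0 // mulr_ge0 // ltW.
pose e' := dl / (4 * M).
have e'0 : 0 < e' by rewrite /e' divr_gt0 // mulr_gt0.
have dl4 : 0 < dl / 4 by rewrite divr_gt0.
have e'2 : 0 < e' / 2 by rewrite divr_gt0.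
have [Na _ HNa] := (cvgrPdist_lt _ _).1 epsc _ dl4.
have [Nb _ HNb] := (cvgrPdist_lt _ _).1 rhoG0 _ e'2.
have [Nc _ HNc] := (cvgrPdist_lt _ _).1 hfc _ e'0.
have [Nd _ HNd] := hfin.
pose i := maxn (maxn Na Nb) (maxn Nc Nd).
have hia : (Na <= i)%N by rewrite /i !leq_max leqnn.
have hib : (Nb <= i)%N by rewrite /i !leq_max leqnn orbT.
have hic : (Nc <= i)%N by rewrite /i !leq_max leqnn !orbT.
have hid : (Nd <= i)%N by rewrite /i !leq_max leqnn !orbT.
have ha : eps i < dl / 4.
  have := HNa i hia; rewrite /= sub0r normrN => h; exact: le_lt_trans (ler_norm _) h.
have hb : `|rhoG i| < e' / 2.
  by have := HNb i hib; rewrite /= sub0r normrN.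
have hc : (Defs.edist (v i) (tangent2 K (G xs) (dir_deriv G xs dd)) < e'%:E)%E.
  have hf := HNd i hid; have := HNc i hic; rewrite /= sub0r normrN => h.
  rewrite -(fineK hf) lte_fin; exact: le_lt_trans (ler_norm _) h.
have [vv [Tvv hvv]] := edist_lt _ _ _ hc.
have [u [Tu hu]] := lemC K G xs U kappa UG LG KG hGr hUG hLG hU k0 hM dd (w i) vv e' e'0 Tvv.
have hsu : (dl%:E <= (dir_deriv2 f xs dd u)%:E)%E.
  apply: le_trans hdl _; rewrite /so_value; apply: ereal_inf_lbound; exists u => //.
rewrite lee_fin in hsu.
have lipf := dd2_lip f xs Uf Lf hUf hLf sf dd u (w i).
have hG2 : `|G2 (w i) - vv| < 2 * e'.
  have -> : G2 (w i) - vv = (v i - vv) - 2 *: rhoG i.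
    by rewrite /v addrAC addrK.
  apply: le_lt_trans (ler_normB _ _) _.
  rewrite normrZ ger0_norm //.
  have : 2 * `|rhoG i| < e' by rewrite -ltr_pdivlMl // mulrC.
  move=> h; lra.
have hf2 := f2w i.
have hdiff : dir_deriv2 f xs dd u - dir_deriv2 f xs dd (w i) <= Lf * `|u - w i|.
  exact: le_trans (ler_norm _) lipf.
have huw : `|u - w i| <= kappa * (2 * e') + e'.
  apply: le_trans hu _; rewrite lerD2r; apply: ler_wpM2l; [exact: ltW | exact: ltW].
have hLu : Lf * `|u - w i| <= Lf * (kappa * (2 * e') + e') by exact: ler_wpM2l.
have hkey : Lf * (kappa * (2 * e') + e') <= dl / 2.
  have -> : dl / 2 = 2 * M * e' by rewrite /e'; field; rewrite gt_eqF.
  rewrite [X in X <= _](_ : _ = (2 * (Lf * kappa) + Lf) * e'); last by ring.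
  apply: ler_wpM2r; first exact: ltW.
  rewrite /M; have : 0 <= Lf * kappa by rewrite mulr_ge0 // ltW.
  move: (Lf * kappa) => LK hLK; lra.
move: hsu hf2 ha hdiff hLu hkey.
move: (dir_deriv2 f xs dd u) (dir_deriv2 f xs dd (w i)) (eps i) (Lf * `|u - w i|).
move: (Lf * (kappa * (2 * e') + e')) => z0 z1 z2 z3 z4; lra.
Qed.
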